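(* Let $k\geq 3$ and $\mathbf{x}=(x_1,\ldots,x_n)\in\Delta^{n-1}$, and let $q=q(\mathbf{x})$. If $|\mathbf{x}|_{\max}<1/(k-1)$, then \[ S_k(\mathbf{x})>q^k\binom{1/q}{k}, \] unless the nonzero entries of $\mathbf{x}$ are equal.
   Context: $\Delta^{n-1}=\{\mathbf{x}\in\mathbb{R}^n: x_i\geq0 \text{ for all } i,\ \sum_i x_i=1\}$. $S_k(\mathbf{x})$ denotes the $k$-th elementary symmetric polynomial of $x_1,\ldots,x_n$. $q(\mathbf{x})=x_1^2+\cdots+x_n^2$. $|\mathbf{x}|_{\max}=\max_i x_i$. For real $s$, $\binom{s}{k}=s(s-1)\cdots(s-k+1)/k!$. *)

(* Defs.v *)
From mathcomp Require Import all_boot all_order all_algebra.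
Set Implicit Arguments. Unset Strict Implicit. Unset Printing Implicit Defensive.
Import Order.TTheory GRing.Theory Num.Theory.
Local Open Scope ring_scope.

Definition in_simplex (R : realFieldType) (n : nat) (x : 'I_n -> R) : Prop :=
  (forall i, 0 <= x i) /\ \sum_(i < n) x i = 1.

Definition elem_sym (R : pzRingType) (n k : nat) (x : 'I_n -> R) : R :=
  \sum_(A : {set 'I_n} | #|A| == k) \prod_(i in A) x i.

Definition sqsum (R : pzRingType) (n : nat) (x : 'I_n -> R) : R :=
  \sum_(i < n) x i ^+ 2.

Definition gbinom (R : fieldType) (s : R) (k : nat) : R :=
  (\prod_(i < k) (s - i%:R)) / (k`!)%:R.

Definition nonzero_entries_equal (R : pzRingType) (n : nat) (x : 'I_n -> R) : Prop :=
  forall i j, x i != 0 -> x j != 0 -> x i = x j.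

(* Main.v *)
Require Import Defs.
From mathcomp Require Import all_boot all_order all_algebra.
From mathcomp Require Import ring lra.
Import Order.TTheory GRing.Theory Num.Theory.
Local Open Scope ring_scope.

Section S.
Variable R : realFieldType.
Variable n : nat.
Implicit Types x y : 'I_n -> R.

Definition zz (i : 'I_n) x := fun l => if l == i then 0 else x l.

Lemma eq_esym j x y : x =1 y -> elem_sym j x = elem_sym j y.
Proof. by move=> e; apply: eq_bigr => A _; apply: eq_bigr => l _; rewrite e. Qed.

Lemma esym0 x : elem_sym 0 x = 1.
Proof.
rewrite /elem_sym (bigD1 set0) ?cards0 //= big_set0 big1 ?addr0 //.
by move=> A /andP[/eqP/cards0_eq ->]; rewrite eqxx.
Qed.

Lemma esym_ge0 j y : (forall i, 0 <= y i) -> 0 <= elem_sym j y.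
Proof. by move=> h; apply: sumr_ge0 => A _; apply: prodr_ge0 => l _. Qed.

Lemma zz_ge0 i y : (forall l, 0 <= y l) -> forall l, 0 <= zz i y l.
Proof. by move=> h l; rewrite /zz; case: ifP. Qed.

Lemma prod_zz i x (A : {set 'I_n}) :
  \prod_(l in A) zz i x l = if i \in A then 0 else \prod_(l in A) x l.
Proof.
case: ifP => iA; first by rewrite (bigD1 i) //= /zz eqxx mul0r.
apply: eq_bigr => l lA; rewrite /zz; case: eqP => // li.
by rewrite li iA in lA.
Qed.

Lemma esym_zz j i x : elem_sym j (zz i x) =
  \sum_(A : {set 'I_n} | (#|A| == j) && (i \notin A)) \prod_(l in A) x l.
Proof.
rewrite /elem_sym (bigID (fun A : {set 'I_n} => i \in A)) /=.
rewrite big1 ?add0r; last by move=> A /andP[_ iA]; rewrite prod_zz iA.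
by apply: eq_bigr => A /andP[_ iA]; rewrite prod_zz (negbTE iA).
Qed.

Lemma Kbij (f : {set 'I_n} -> R) j i :
 \sum_(A : {set 'I_n} | (#|A| == j.+1) && (i \in A)) f A =
 \sum_(B : {set 'I_n} | (#|B| == j) && (i \notin B)) f (i |: B).
Proof.
rewrite (reindex_onto (fun B => i |: B) (fun A => A :\ i)) /=; last first.
  by move=> A /andP[_ iA]; rewrite setD1K.
apply: eq_bigl => B; rewrite setU11 andbT.
case iB: (i \in B) => /=.
  rewrite andbF; apply: negbTE; apply/negP => /andP[_ /eqP E].
  have : i \notin (i |: B) :\ i by rewrite setD11.
  by rewrite E iB.
by rewrite andbT setU1K ?iB // eqxx andbT cardsU1 iB add1n eqSS.
Qed.

Lemma L1 j i x : elem_sym j.+1 x = elem_sym j.+1 (zz i x) + x i * elem_sym j (zz i x).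
Proof.
rewrite (esym_zz j.+1) (esym_zz j) {1}/elem_sym (bigID (fun A : {set 'I_n} => i \in A)) /= addrC.
congr (_ + _).
rewrite Kbij mulr_sumr; apply: eq_bigr => B /andP[_ iB].
by rewrite big_setU1.
Qed.

Lemma L2 j x : \sum_i x i * elem_sym j (zz i x) = j.+1%:R * elem_sym j.+1 x.
Proof.
transitivity (\sum_i \sum_(A : {set 'I_n} | (#|A| == j.+1) && (i \in A)) \prod_(l in A) x l).
  apply: eq_bigr => i _; rewrite Kbij esym_zz mulr_sumr.
  by apply: eq_bigr => B /andP[_ iB]; rewrite big_setU1.
under eq_bigr => i _ do rewrite big_mkcondr.
rewrite exchange_big /= /elem_sym mulr_sumr; apply: eq_bigr => A /eqP cA.
by rewrite -big_mkcond /= sumr_const cA mulr_natl.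
Qed.


Lemma zzC i i' x : zz i' (zz i x) =1 zz i (zz i' x).
Proof. by move=> l; rewrite /zz; case: (l == i); case: (l == i'). Qed.

Lemma Mono m i i' x : i != i' ->
  elem_sym m.+1 (zz i x) - elem_sym m.+1 (zz i' x) =
  (x i' - x i) * elem_sym m (zz i (zz i' x)).
Proof.
move=> ne.
rewrite (L1 m i' (zz i x)) (L1 m i (zz i' x)).
rewrite (eq_esym m.+1 _ _ (zzC i i' x)) (eq_esym m _ _ (zzC i i' x)).
have -> : zz i x i' = x i' by rewrite /zz eq_sym (negbTE ne).
have -> : zz i' x i = x i by rewrite /zz (negbTE ne).
ring.
Qed.

Lemma cheb_id (w a c : 'I_n -> R) :
  2 * ((\sum_i w i * a i * c i) * (\sum_i w i) - (\sum_i w i * a i) * (\sum_i w i * c i))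
  = \sum_i \sum_j w i * w j * ((a i - a j) * (c i - c j)).
Proof.
pose A i j := w i * a i * c i * w j.
pose B i j := w i * a i * (w j * c j).
transitivity (\sum_i \sum_j (A i j + A j i - (B i j + B j i))); last first.
  by apply: eq_bigr => i _; apply: eq_bigr => j _; rewrite /A /B; ring.
symmetry.
under eq_bigr => i _ do rewrite sumrB !big_split /=.
rewrite sumrB !big_split /=.
rewrite [\sum_i \sum_j A j i]exchange_big [\sum_i \sum_j B j i]exchange_big /=.
rewrite mulr_suml mulr_suml.
have -> : \sum_i w i * a i * c i * \sum_i w i = \sum_i \sum_j A i j.
  by apply: eq_bigr => i _; rewrite mulr_sumr.
have -> : \sum_i w i * a i * \sum_i w i * c i = \sum_i \sum_j B i j.
  by apply: eq_bigr => i _; rewrite mulr_sumr.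
ring.
Qed.

Lemma sum_lt0 (F : 'I_n -> R) i0 : (forall i, F i <= 0) -> F i0 < 0 -> \sum_i F i < 0.
Proof.
move=> h h0; rewrite (bigD1 i0) //=.
have : \sum_(i | i != i0) F i <= 0.
  rewrite -lerN2 oppr0 -sumrN; apply: sumr_ge0 => i _; rewrite oppr_ge0; exact: h.
lra.
Qed.

Lemma sum_le0 (F : 'I_n -> R) : (forall i, F i <= 0) -> \sum_i F i <= 0.
Proof.
move=> h; rewrite -lerN2 oppr0 -sumrN; apply: sumr_ge0 => i _; rewrite oppr_ge0; exact: h.
Qed.


Definition DD m x := \sum_i \sum_j x i * x j *
   ((x i - x j) * (elem_sym m (zz i x) - elem_sym m (zz j x))).

Lemma step_id m x : \sum_i x i = 1 ->
  2 * (m.+2%:R * elem_sym m.+2 x - (1 - m.+1%:R * sqsum x) * elem_sym m.+1 x)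
  = - DD m x.
Proof.
move=> x1.
set c := fun i => elem_sym m (zz i x).
have E1: m.+2%:R * elem_sym m.+2 x = elem_sym m.+1 x - \sum_i x i * x i * c i.
  rewrite -(L2 m.+1).
  transitivity (\sum_i (x i * elem_sym m.+1 x - x i * x i * c i)).
    by apply: eq_bigr => i _; rewrite (L1 m i x) /c; ring.
  by rewrite sumrB -mulr_suml x1 mul1r.
have E2: \sum_i x i * c i = m.+1%:R * elem_sym m.+1 x := L2 m x.
have E3: sqsum x = \sum_i x i * x i.
  by rewrite /sqsum; apply: eq_bigr => i _; rewrite expr2.
rewrite /DD -(cheb_id x x c) E1 E3 E2 x1.
ring.
Qed.

Lemma DD_le0 m x : (forall i, 0 <= x i) -> DD m x <= 0.
Proof.
move=> x0; apply: sum_le0 => i; apply: sum_le0 => j.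
case: (eqVneq i j) => [->|ne]; first by rewrite subrr mul0r mulr0.
case: m => [|m]; first by rewrite !esym0 subrr !mulr0.
rewrite Mono //.
set S := elem_sym m _.
have hS : 0 <= S by apply: esym_ge0; apply: zz_ge0; apply: zz_ge0.
have h : 0 <= x i * x j * S * (x i - x j) ^+ 2.
  by apply: mulr_ge0; [apply: mulr_ge0; [apply: mulr_ge0|]|apply: sqr_ge0].
have -> : x i * x j * ((x i - x j) * ((x j - x i) * S)) = - (x i * x j * S * (x i - x j) ^+ 2)
  by ring.
by rewrite oppr_le0.
Qed.

Lemma DD1_lt0 x i0 j0 : (forall i, 0 <= x i) -> 0 < x i0 -> 0 < x j0 -> x i0 != x j0 ->
  DD 1 x < 0.
Proof.
move=> x0 p0 q0 ne.
have nij : i0 != j0 by apply: contraNneq ne => ->.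
apply: (sum_lt0 _ i0).
  move=> i; apply: sum_le0 => j.
  case: (eqVneq i j) => [->|ne']; first by rewrite subrr mul0r mulr0.
  rewrite Mono // esym0 mulr1.
  have h : 0 <= x i * x j * (x i - x j) ^+ 2 by apply: mulr_ge0; [apply: mulr_ge0|apply: sqr_ge0].
  have -> : x i * x j * ((x i - x j) * (x j - x i)) = - (x i * x j * (x i - x j) ^+ 2) by ring.
  by rewrite oppr_le0.
apply: (sum_lt0 _ j0).
  move=> j.
  case: (eqVneq i0 j) => [->|ne']; first by rewrite subrr mul0r mulr0.
  rewrite Mono // esym0 mulr1.
  have h : 0 <= x i0 * x j * (x i0 - x j) ^+ 2 by apply: mulr_ge0; [apply: mulr_ge0|apply: sqr_ge0].
  have -> : x i0 * x j * ((x i0 - x j) * (x j - x i0)) = - (x i0 * x j * (x i0 - x j) ^+ 2) by ring.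
  by rewrite oppr_le0.
rewrite Mono // esym0 mulr1.
have h : 0 < x i0 * x j0 * (x i0 - x j0) ^+ 2.
  apply: mulr_gt0; first exact: mulr_gt0.
  by rewrite lt0r sqr_ge0 andbT sqrf_eq0 subr_eq0.
have -> : x i0 * x j0 * ((x i0 - x j0) * (x j0 - x i0)) = - (x i0 * x j0 * (x i0 - x j0) ^+ 2) by ring.
by rewrite oppr_lt0.
Qed.


Lemma sum_gt0 (F : 'I_n -> R) i0 : (forall i, 0 <= F i) -> 0 < F i0 -> 0 < \sum_i F i.
Proof.
move=> h h0; rewrite -oppr_lt0 -sumrN; apply: (sum_lt0 _ i0).
  by move=> i; rewrite oppr_le0.
by rewrite oppr_lt0.
Qed.

End S.

Theorem theorem3 (R : realFieldType) (n k : nat) (x : 'I_n -> R) :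
  (3 <= k)%N ->
  in_simplex x ->
  (forall i, x i < 1 / (k%:R - 1)) ->
  ~ nonzero_entries_equal x ->
  elem_sym k x > sqsum x ^+ k * gbinom (sqsum x)^-1 k.
Proof.
move=> k3 [x0 x1] xM Hne.
have [i0 [j0 [hi [hj hne]]]] : exists i j, x i != 0 /\ x j != 0 /\ x i != x j.
  case: (boolP [exists i, exists j, (x i != 0) && (x j != 0) && (x i != x j)]).
    by move=> /existsP[i /existsP[j /andP[/andP[a b] c]]]; exists i, j.
  move=> H; exfalso; apply: Hne => i j a b; apply/eqP; move: H.
  rewrite negb_exists => /forallP /(_ i); rewrite negb_exists => /forallP /(_ j).
  by rewrite a b /= negbK.
have pi : 0 < x i0 by rewrite lt0r hi x0.
have pj : 0 < x j0 by rewrite lt0r hj x0.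
set q := sqsum x.
have qpos : 0 < q.
  rewrite /q /sqsum (bigD1 i0) //=.
  apply: (lt_le_trans (exprn_gt0 2 pi)); rewrite lerDl.
  by apply: sumr_ge0 => i _; exact: sqr_ge0.
case: k k3 xM => [|k'] //= k3 xM.
set M := 1 / (k'.+1%:R - 1) in xM.
have k'pos : 0 < k'%:R :> R by rewrite ltr0n; case: k' k3 {xM M}.
have eM : k'%:R * M = 1.
  by rewrite /M -natr1 addrK mul1r mulfV // gt_eqF.
have qM : q < M.
  have E : \sum_i x i * (M - x i) = M - q.
    transitivity (\sum_i (x i * M - x i ^+ 2)); first by apply: eq_bigr => i _; ring.
    by rewrite sumrB -mulr_suml x1 mul1r.
  have : 0 < \sum_i x i * (M - x i).
    apply: (@sum_gt0 R n _ i0).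
      by move=> i; apply: mulr_ge0 => //; rewrite subr_ge0 ltW.
    by apply: mulr_gt0 => //; rewrite subr_gt0.
  rewrite E; lra.
have kq : k'%:R * q < 1 by rewrite -[X in _ < X]eM ltr_pM2l.
pose P j := (\prod_(i < j) (1 - i%:R * q)) / (j`!)%:R.
have HP : forall m, P m.+1 * m.+1%:R = (1 - m%:R * q) * P m.
  move=> m; rewrite /P big_ord_recr /= factS natrM.
  have f0 : (m`!)%:R != 0 :> R by rewrite pnatr_eq0 -lt0n fact_gt0.
  have f1 : (m.+1)%:R != 0 :> R by rewrite pnatr_eq0.
  by field; rewrite f0 nat1r f1.
have main : forall m, (m < k'.+1)%N ->
    P m.+1 <= elem_sym m.+1 x /\ ((2 <= m)%N -> P m.+1 < elem_sym m.+1 x).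
  elim=> [|m IH] hm.
    have E1 : elem_sym 1 x = 1.
      by have := @L2 R n 0 x; under eq_bigr => i _ do rewrite esym0 mulr1; rewrite x1 mul1r.
    have E2 : P 1 = 1 by rewrite /P big_ord1 /= mul0r subr0 divr1.
    by rewrite E1 E2; split.
  have [IH1 IH2] := IH (ltnW hm).
  have st := @step_id R n m x x1; rewrite -/q in st.
  have fpos : 0 < 1 - m.+1%:R * q.
    have : m.+1%:R * q <= k'%:R * q.
      by apply: (ler_wpM2r (ltW qpos)); rewrite ler_nat.
    lra.
  have Dle := @DD_le0 R n m x x0.
  have HPm := HP m.+1.
  have m2 : 0 < m.+2%:R :> R by rewrite ltr0n.
  have hA : (1 - m.+1%:R * q) * P m.+1 <= (1 - m.+1%:R * q) * elem_sym m.+1 x.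
    by rewrite ler_wpM2l // ltW.
  split.
    rewrite -(ler_pM2r m2); rewrite -/q in st; nra.
  move=> m2le.
  rewrite -(ltr_pM2r m2).
  case: (ltngtP m 1) => hm1.
  - by rewrite ltnS leqn0 in hm1; rewrite (eqP hm1) in m2le.
  - have hB : (1 - m.+1%:R * q) * P m.+1 < (1 - m.+1%:R * q) * elem_sym m.+1 x.
      by rewrite ltr_pM2l // IH2.
    lra.
  - subst m.
    have Dlt := @DD1_lt0 R n x i0 j0 x0 pi pj hne.
    lra.
have [h1 h2] := main k' (ltnSn k').
have -> : q ^+ k'.+1 * gbinom q^-1 k'.+1 = P k'.+1.
  rewrite /gbinom /P mulrA; congr (_ / _).
  have -> : q ^+ k'.+1 = \prod_(i < k'.+1) q by rewrite prodr_const card_ord.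
  rewrite -big_split /=; apply: eq_bigr => i _.
  by rewrite mulrBr mulfV ?gt_eqF // mulrC.
exact: h2.
Qed.
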